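(* Let $(M,f,g)$ be an $(m,n)$-hypermodule over a commutative Krasner $(m,n)$-hyperring $(R,f',g')$ with scalar identity $1$, let $N\subseteq Q$ be proper subhypermodules of $M$, and let $\phi:\mathcal{SH}(M)\to\mathcal{SH}(M)\cup\{\varnothing\}$ be a function. If $Q$ is an $n$-ary $\phi$-classical prime subhypermodule of $M$, then $Q/N$ is an $n$-ary $\phi_N$-classical prime subhypermodule of $M/N$.
   Context: A commutative Krasner $(m,n)$-hyperring with scalar identity $1$ is a triple $(R,f',g')$ where $(R,f')$ is a canonical $m$-ary hypergroup with zero $0$, $(R,g')$ is a commutative $n$-ary semigroup, $g'$ is distributive over $f'$, $0$ is a zero element for $g'$, and $g'(x,1^{(n-1)})=x$. Notation: $x_i^j$ denotes $x_i,\dots,x_j$ and $x^{(k)}$ denotes $x$ repeated $k$ times. An $(m,n)$-hypermodule over $R$ is a triple $(M,f,g)$ with $(M,f)$ a canonical $m$-ary hypergroup with zero $0$ and $g:R^{n-1}\times M\to P^*(M)$ satisfying: $g(r_1^{n-1},f(x_1^m))=f(g(r_1^{n-1},x_1),\dots,g(r_1^{n-1},x_m))$; $g(r_1^{i-1},f'(s_1^m),r_{i+1}^{n-1},x)=f(g(r_1^{i-1},s_1,r_{i+1}^{n-1},x),\dots,g(r_1^{i-1},s_m,r_{i+1}^{n-1},x))$; $g(r_1^{i-1},g'(r_i^{i+n-1}),r_{i+n}^{2n-2},x)=g(r_1^{n-1},g(r_n^{2n-2},x))$; $g(r_1^{i-1},0,r_{i+1}^{n-1},x)=\{0\}$; moreover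 $g(1^{(n-1)},a)=\{a\}$. Operations on subsets are unions over elements. A subhypermodule is a nonempty $N\subseteq M$ with $(N,f)$ an $m$-ary subhypergroup and $g(R^{(n-1)},N)\subseteq N$; $\mathcal{SH}(M)$ denotes the set of subhypermodules of $M$. Given $\phi:\mathcal{SH}(M)\to\mathcal{SH}(M)\cup\{\varnothing\}$, a proper subhypermodule $Q$ is $n$-ary $\phi$-classical prime if for $r_1^{n-1}\in R$, $a\in M$, $g(r_1^{n-1},a)\subseteq Q\setminus\phi(Q)$ implies $g(r_i,1^{(n-2)},a)\subseteq Q$ for some $1\le i\le n-1$ (the same definition applies to any $(m,n)$-hypermodule and function on its subhypermodules). The quotient $M/N=\{f(a,N,0^{(m-2)}):a\in M\}$ is an $(m,n)$-hypermodule with $F(f(a_1,N,0^{(m-2)}),\dots,f(a_m,N,0^{(m-2)}))=\{f(t,N,0^{(m-2)}):t\in f(a_1^m)\}$ and $G(r_1^{n-1},f(a,N,0^{(m-2)}))=\{f(z,N,0^{(m-2)}):z\in g(r_1^{n-1},a)\}$; for a subhypermodule $K\supseteq N$, $K/N=\{f(a,N,0^{(m-2)}):a\in K\}$, and every subhypermodule of $M/N$ has this form. Define $\phi_N:\mathcal{SH}(M/N)\to\mathcal{SH}(M/N)\cup\{\varnothing\}$ by $\phi_N(K/N)=f(\phi(K),N,0^{(m-2)})/N$ for subhypermodules $K\supseteq N$, and $\phi_N(K/N)=\varnothing$ if $\phi(K)=\varnothing$. *)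

(* Defs.v *)
From mathcomp Require Import all_boot.
From Stdlib Require List Permutation.

Set Implicit Arguments.
Unset Strict Implicit.
Unset Printing Implicit Defensive.

Definition hset (T : Type) := T -> Prop.
Definition eqs {T : Type} (a : T) : hset T := fun x => x = a.
Definition setAll {T : Type} : hset T := fun _ => True.
Definition hsubset {T : Type} (A B : hset T) := forall x, A x -> B x.
Definition hseteq {T : Type} (A B : hset T) := forall x, A x <-> B x.
Definition hsetD {T : Type} (A B : hset T) : hset T := fun x => A x /\ ~ B x.
Definition bigcup {A B : Type} (P : hset A) (F : A -> hset B) : hset B :=
  fun z => exists a, P a /\ F a z.

(* A hyperoperation of (intended) arity k: takes the list of its k arguments. *)
Definition hop (T : Type) := seq T -> hset T.

Definition lift {T : Type} (f : hop T) (As : seq (hset T)) : hset T :=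
  fun z => exists xs, List.Forall2 (fun x A => A x) xs As /\ f xs z.

Record canonical_hypergroup (T : Type) (m : nat) (f : hop T) (e : T) (neg : T -> T)
  : Prop := {
  ch_nonempty : forall xs, size xs = m -> exists z, f xs z;
  (* associativity: f(x_1^{i-1}, f(x_i^{m+i-1}), x_{m+i}^{2m-1}) independent of i *)
  ch_assoc : forall xs i, size xs = (2 * m - 1)%N -> (i < m)%N ->
    hseteq (lift f (map eqs (take i xs) ++ f (take m (drop i xs)) :: map eqs (drop (i + m) xs)))
           (lift f (f (take m xs) :: map eqs (drop m xs)));
  (* reproductivity: f(x_1^{i-1}, H, x_{i+1}^m) = H *)
  ch_reprod : forall xs i, size xs = m -> (i < m)%N ->
    hseteq (lift f (set_nth setAll (map eqs xs) i setAll)) setAll;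
  ch_comm : forall xs ys, size xs = m -> Permutation.Permutation xs ys -> hseteq (f xs) (f ys);
  ch_ident : forall x, hseteq (f (x :: nseq m.-1 e)) (eqs x);
  ch_ident_uniq : forall e', (forall x, hseteq (f (x :: nseq m.-1 e')) (eqs x)) -> e' = e;
  ch_inv : forall x, f (x :: neg x :: nseq (m - 2) e) e;
  ch_inv_uniq : forall x y, f (x :: y :: nseq (m - 2) e) e -> y = neg x;
  (* reversibility: x in f(x_1^m) implies x_i in f(-x_1,...,-x_{i-1},x,-x_{i+1},...,-x_m) *)
  ch_rev : forall xs x i, size xs = m -> f xs x -> (i < m)%N ->
    f (set_nth x (map neg xs) i x) (nth x xs i)
}.

Record krasner_hyperring (R : Type) (m n : nat) (f' : hop R) (g' : seq R -> R)
  (zero : R) (neg : R -> R) (one : R) : Prop := {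
  kr_add : canonical_hypergroup m f' zero neg;
  kr_mul_assoc : forall xs i, size xs = (2 * n - 1)%N -> (i < n)%N ->
    g' (take i xs ++ g' (take n (drop i xs)) :: drop (i + n) xs)
    = g' (g' (take n xs) :: drop n xs);
  kr_mul_comm : forall xs ys, size xs = n -> Permutation.Permutation xs ys -> g' xs = g' ys;
  kr_distr : forall xs ys i, size xs = n -> size ys = m -> (i < n)%N ->
    hseteq (bigcup (f' ys) (fun y => eqs (g' (set_nth zero xs i y))))
           (lift f' (map (fun y => eqs (g' (set_nth zero xs i y))) ys));
  kr_zero : forall xs i, size xs = n -> (i < n)%N -> g' (set_nth zero xs i zero) = zero;
  kr_one : forall x, g' (x :: nseq n.-1 one) = x
}.

Record hypermodule (R M : Type) (m n : nat) (f' : hop R) (g' : seq R -> R)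
  (zeroR one : R) (f : hop M) (g : seq R -> M -> hset M) (zero : M) (neg : M -> M)
  : Prop := {
  hm_add : canonical_hypergroup m f zero neg;
  hm_nonempty : forall rs x, size rs = n.-1 -> exists z, g rs x z;
  hm_ax1 : forall rs xs, size rs = n.-1 -> size xs = m ->
    hseteq (bigcup (f xs) (g rs)) (lift f (map (g rs) xs));
  hm_ax2 : forall rs ss i x, size rs = n.-1 -> size ss = m -> (i < n.-1)%N ->
    hseteq (bigcup (f' ss) (fun s => g (set_nth zeroR rs i s) x))
           (lift f (map (fun s => g (set_nth zeroR rs i s) x) ss));
  hm_ax3 : forall rs i x, size rs = (2 * n - 2)%N -> (i < n.-1)%N ->
    hseteq (g (take i rs ++ g' (take n (drop i rs)) :: drop (i + n) rs) x)
           (bigcup (g (drop n.-1 rs) x) (g (take n.-1 rs)));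
  hm_ax4 : forall rs i x, size rs = n.-1 -> (i < n.-1)%N ->
    hseteq (g (set_nth zeroR rs i zeroR) x) (eqs zero);
  hm_one : forall a, hseteq (g (nseq n.-1 one) a) (eqs a)
}.

Definition subhypergroup (T : Type) (m : nat) (f : hop T) (S : hset T) : Prop :=
  (exists x, S x) /\
  (forall xs, size xs = m -> List.Forall S xs -> hsubset (f xs) S) /\
  (forall xs i, size xs = m -> (i < m)%N -> List.Forall S xs ->
     hseteq (lift f (set_nth S (map eqs xs) i S)) S).

Definition subhypermodule (R X : Type) (m n : nat) (f : hop X) (g : seq R -> X -> hset X)
  (S : hset X) : Prop :=
  subhypergroup m f S /\
  (forall rs x, size rs = n.-1 -> S x -> hsubset (g rs x) S).

Definition proper_set {T : Type} (S : hset T) : Prop := exists x, ~ S x.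

Definition phi_classical_prime (R X : Type) (m n : nat) (one : R) (f : hop X)
  (g : seq R -> X -> hset X) (phi : hset X -> hset X) (Q : hset X) : Prop :=
  subhypermodule m n f g Q /\ proper_set Q /\
  forall rs a, size rs = n.-1 ->
    hsubset (g rs a) (hsetD Q (phi Q)) ->
    exists i, (i < n.-1)%N /\ hsubset (g (nth one rs i :: nseq (n - 2) one) a) Q.

Section Quotient.
Variables (R M : Type) (m : nat) (f : hop M) (g : seq R -> M -> hset M) (zero : M)
  (N : hset M).

Definition coset (a : M) : hset M := lift f (eqs a :: N :: nseq (m - 2) (eqs zero)).

Definition QElt : Type := {S : hset M | exists a, S = coset a}.

Definition quotF : hop QElt := fun Cs D =>
  exists as_, List.Forall2 (fun a (C : QElt) => sval C = coset a) as_ Cs /\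
  exists t, f as_ t /\ sval D = coset t.

Definition quotG : seq R -> QElt -> hset QElt := fun rs C D =>
  exists a, sval C = coset a /\ exists z, g rs a z /\ sval D = coset z.

Definition quot_set (K : hset M) : hset QElt := fun C => exists a, K a /\ sval C = coset a.

Definition quot_preim (S : hset QElt) : hset M := fun a => exists C, S C /\ sval C = coset a.

(* phi_N(K/N) = f(phi(K), N, 0^(m-2))/N  (empty when phi(K) is empty) *)
Definition phiN (phi : hset M -> hset M) (S : hset QElt) : hset QElt :=
  quot_set (lift f (phi (quot_preim S) :: N :: nseq (m - 2) (eqs zero))).
End Quotient.
Arguments coset {M} m f zero N a _.
Arguments QElt {M} m f zero N.
Arguments quotF {M} m f zero N _ _.
Arguments quotG {R M} m f g zero N _ _ _.
Arguments quot_set {M} m f zero N K _.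
Arguments quot_preim {M} m f zero N S _.
Arguments phiN {M} m f zero N phi S _.

(* Main.v *)
Require Import Defs.
From mathcomp Require Import all_boot.
From mathcomp Require Import zify.
From Stdlib Require Import ProofIrrelevance FunctionalExtensionality PropExtensionality.

Set Implicit Arguments.
Unset Strict Implicit.

Lemma F2_size {A B} (Rl : A -> B -> Prop) xs ys :
  List.Forall2 Rl xs ys -> size xs = size ys.
Proof. induction 1; simpl; auto. Qed.

Lemma F2_Forall_gen {A B} (Rl : A -> B -> Prop) (P : B -> Prop) (Q : A -> Prop) xs ys :
  List.Forall2 Rl xs ys -> List.Forall P ys -> (forall a b, Rl a b -> P b -> Q a) ->
  List.Forall Q xs.
Proof. induction 1; intros HP HH; inversion HP; subst; constructor; eauto. Qed.

Lemma F2_left {A B} (Rl : A -> B -> Prop) (Q : A -> Prop) xs ys :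
  List.Forall2 Rl xs ys -> (forall a b, Rl a b -> Q a) -> List.Forall Q xs.
Proof. induction 1; intros HH; constructor; eauto. Qed.

Lemma Forall_nseq {T} (P : T -> Prop) k x : P x -> List.Forall P (nseq k x).
Proof. move=> Px; elim: k => [|k IH] /=; constructor; auto. Qed.

Lemma F2_nseq {T} (S : hset T) k x : S x ->
  List.Forall2 (fun y A => A y) (nseq k x) (nseq k S).
Proof. move=> Px; elim: k => [|k IH] /=; constructor; auto. Qed.

Lemma Forall_set_nth {T} (P : T -> Prop) (s : seq T) d i v :
  P d -> P v -> List.Forall P s -> List.Forall P (set_nth d s i v).
Proof.
  move=> Pd Pv HF; move: i; induction HF as [|x s Px HF IH]; move=> i.
  - have H : forall j, List.Forall P (ncons j d [:: v]).
    { elim=> [|j IHj] /=; constructor; auto. }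
    case: i => [|j]; [by constructor| exact: H j.+1].
  - case: i => [|i] /=; constructor; auto.
Qed.

Lemma Forall_map_eqs {T} (P : hset T) xs :
  List.Forall P xs -> List.Forall (fun A => hsubset A P) (map eqs xs).
Proof. induction 1; constructor; auto. move=> y ->; auto. Qed.

Lemma F2_eqs {T} (zs s : seq T) :
  List.Forall2 (fun z A => A z) zs (map eqs s) -> zs = s.
Proof.
  elim: s zs => [|a s IH] zs H; inversion H as [|z a' zs' s' Hz Hr]; subst; auto.
  rewrite (IH _ Hr). by rewrite Hz.
Qed.

Lemma F2_eqs_refl {T} (s : seq T) : List.Forall2 (fun z A => A z) s (map eqs s).
Proof. elim: s => [|a s IH]; constructor; auto. reflexivity. Qed.

Lemma F2_set_nth_map {A B} (h : A -> B) (P : hset A) (P' : hset B) (as_ zs : seq A) i :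
  (i < size as_)%N ->
  List.Forall2 (fun z S => S z) zs (set_nth P (map eqs as_) i P) ->
  (forall z, P z -> P' (h z)) ->
  List.Forall2 (fun y S => S y) (map h zs) (set_nth P' (map eqs (map h as_)) i P').
Proof.
  elim: as_ i zs => [|a s IH] [|i] zs //= Hi H Hh; inversion H as [|z a' zs' s' Hz Hr]; subst.
  - constructor; auto. rewrite (F2_eqs Hr). apply F2_eqs_refl.
  - constructor; [by rewrite /eqs Hz| apply IH; auto].
Qed.

Lemma reps {A B} (Rl : A -> B -> Prop) xs :
  List.Forall (fun x => exists a, Rl a x) xs -> exists as_, List.Forall2 Rl as_ xs.
Proof.
  induction 1. by exists [::]; constructor.
  case: H => a Ha. case: IHForall => as_ H2. exists (a :: as_); constructor; auto.
Qed.

Lemma forall2_map_forall {A} (P : A -> Prop) (h : A -> hset A) (Q : hset A) zs xs :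
  List.Forall2 (fun z S => S z) zs (map h xs) -> List.Forall P xs ->
  (forall x z, P x -> h x z -> Q z) -> List.Forall Q zs.
Proof.
  elim: xs zs => [|x xs IH] zs H HP HH; inversion H; subst; constructor.
  - inversion HP; subst; eauto.
  - inversion HP; subst; eauto.
Qed.

Definition mkQ {M} m (f : hop M) zero N (a : M) : QElt m f zero N :=
  exist _ (coset m f zero N a) (ex_intro _ a erefl).

Lemma mkQ_eq {M} m (f : hop M) zero N (C : QElt m f zero N) a :
  sval C = coset m f zero N a -> C = mkQ m f zero N a.
Proof. case: C => S p /= E. subst. rewrite /mkQ. f_equal. apply proof_irrelevance. Qed.

Lemma map_mkQ {M} m (f : hop M) zero N (Q : hset M) as_ xs :
  List.Forall2 (fun a (C : QElt m f zero N) => Q a /\ sval C = coset m f zero N a) as_ xs ->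
  xs = map (mkQ m f zero N) as_.
Proof.
  induction 1 as [|a C as' xs' HaC Hr IH]; simpl; auto.
  case: HaC => _ E. rewrite (mkQ_eq E). by rewrite IH.
Qed.

Lemma F2_mkQ {M} m (f : hop M) zero N zs :
  List.Forall2 (fun a (C : QElt m f zero N) => sval C = coset m f zero N a) zs
    (map (mkQ m f zero N) zs).
Proof. elim: zs => [|z zs IH]; constructor; auto. Qed.

Theorem mainTheorem10 (R M : Type) (m n : nat)
  (f' : hop R) (g' : seq R -> R) (zeroR oneR : R) (negR : R -> R)
  (f : hop M) (g : seq R -> M -> hset M) (zeroM : M) (negM : M -> M)
  (Hm : (2 <= m)%N) (Hn : (2 <= n)%N)
  (HR : krasner_hyperring m n f' g' zeroR negR oneR)
  (HM : hypermodule m n f' g' zeroR oneR f g zeroM negM)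
  (phi : hset M -> hset M)
  (Hphi : forall K, subhypermodule m n f g K ->
            subhypermodule m n f g (phi K) \/ (forall x, ~ phi K x))
  (N Q : hset M)
  (HN : subhypermodule m n f g N) (HNp : proper_set N)
  (HQ : subhypermodule m n f g Q) (HQp : proper_set Q)
  (HNQ : hsubset N Q)
  (Hprime : phi_classical_prime m n oneR f g phi Q) :
  phi_classical_prime m n oneR
    (quotF m f zeroM N) (quotG m f g zeroM N)
    (phiN m f zeroM N phi) (quot_set m f zeroM N Q).
Proof.
  have Hm2 : m.-1 = (m-2).+1 by lia.
  have Hch := hm_add HM.
  have zeroIn : forall K, subhypermodule m n f g K -> K zeroM.
  { move=> K [[[x Kx] _] HK].
    have [k Hk] : exists k, n.-1 = k.+1 by exists n.-2; lia.
    have Hs1 : size (nseq k.+1 zeroR) = n.-1 by rewrite size_nseq Hk.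
    have Hs2 : (0 < n.-1)%N by rewrite Hk.
    have Hz := hm_ax4 HM (rs:=nseq k.+1 zeroR) (i:=0) x Hs1 Hs2.
    apply (HK (nseq k.+1 zeroR) x); [by rewrite size_nseq Hk| exact Kx|].
    apply (Hz zeroM). reflexivity. }
  have selfmem : forall a, coset m f zeroM N a a.
  { move=> a. exists (a :: nseq m.-1 zeroM). split.
    - rewrite Hm2 /=. constructor; [reflexivity|]. constructor; [exact (zeroIn N HN)|].
      apply F2_nseq. reflexivity.
    - apply (ch_ident Hch a). reflexivity. }
  have memK : forall K, subhypermodule m n f g K -> hsubset N K ->
      forall a b, K a -> coset m f zeroM N a b -> K b.
  { move=> K HK NK a b Ka [xs [H2 Hf]].
    have [[_ [Kcl _]] _] := HK.
    apply (Kcl xs); [|apply (F2_Forall_gen (P := fun S => hsubset S K) H2)| exact Hf].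
    - rewrite (F2_size H2) /= size_nseq. lia.
    - constructor; [by move=> y ->|]. constructor; [exact NK|].
      apply Forall_nseq. move=> y ->. exact (zeroIn K HK).
    - move=> y A Ay HA. exact: HA y Ay. }
  have memQ : forall a b, coset m f zeroM N a = coset m f zeroM N b -> Q b -> Q a.
  { move=> a b E Qb. apply (memK Q HQ HNQ b a Qb). rewrite -E. apply selfmem. }
  have [[_ [Qcl Qrep]] gcl] := HQ.
  have qcl : forall xs, size xs = m -> List.Forall (quot_set m f zeroM N Q) xs ->
      hsubset (quotF m f zeroM N xs) (quot_set m f zeroM N Q).
  { move=> xs Hs HF D [as_ [H2 [t [Hf HD]]]]. exists t; split; [|exact HD].
    apply (Qcl as_); [by rewrite (F2_size H2)| |exact Hf].
    apply (F2_Forall_gen H2 HF). move=> a C E [b [Qb Eb]].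
    apply (memQ a b); [by rewrite -E Eb| exact Qb]. }
  split; [split|split].
  - split; [exists (mkQ m f zeroM N zeroM); exists zeroM; split; [exact (zeroIn Q HQ)|reflexivity]|].
    split; [exact qcl|].
    move=> xs i Hs Hi HF D; split.
    + move=> [ys [H2 Hq]]. apply (qcl ys).
      * rewrite (F2_size H2) size_set_nth size_map. lia.
      * apply (F2_Forall_gen (P := fun A => hsubset A (quot_set m f zeroM N Q)) H2).
        -- apply Forall_set_nth; [by []|by []|]. by apply Forall_map_eqs.
        -- move=> y A Ay HA. exact: HA y Ay.
      * exact Hq.
    + move=> [d [Qd ED]].
      have [as_ Has] := reps HF.
      have Exs := map_mkQ Has.
      have QF : List.Forall Q as_ by apply (F2_left Has); move=> a b [].
      have Hsa : size as_ = m by rewrite (F2_size Has).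
      have [_ /(_ Qd) [zs [Hz Hfz]]] := Qrep as_ i Hsa Hi QF d.
      exists (map (mkQ m f zeroM N) zs). split.
      * rewrite Exs. apply (F2_set_nth_map (P := Q)); [by rewrite Hsa| exact Hz|].
        move=> z Qz. exists z; split; auto.
      * exists zs. split; [apply F2_mkQ| exists d; split; auto].
  - move=> rs x Hrs [b [Qb Eb]] D [a [Ea [z [Hg ED]]]]. exists z; split; [|exact ED].
    apply (gcl rs a Hrs); [|exact Hg]. apply (memQ a b); [by rewrite -Ea Eb| exact Qb].
  - case: HQp => x nQx. exists (mkQ m f zeroM N x). move=> [a [Qa E]]. apply nQx.
    exact (memQ x a E Qa).
  - move=> rs [SA [a Ea]] Hrs Hsub.
    have HPQ : quot_preim m f zeroM N (quot_set m f zeroM N Q) = Q.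
    { apply functional_extensionality => y; apply propositional_extensionality; split.
      - move=> [C [[b [Qb Eb]] Ey]]. apply (memQ y b); [by rewrite -Ey Eb | exact Qb].
      - move=> Qy; exists (mkQ m f zeroM N y); split; [exists y; split; auto|reflexivity]. }
    have Hsub' : hsubset (g rs a) (hsetD Q (phi Q)).
    { move=> z Hz.
      have := Hsub (mkQ m f zeroM N z).
      case.
      { exists a; split; [exact Ea| exists z; split; auto]. }
      move=> [b [Qb Eb]] Hnphi. split; [exact (memQ z b Eb Qb)|].
      move=> Hphz. apply Hnphi. rewrite /phiN HPQ. exists z. split; [|reflexivity].
      exists (z :: nseq m.-1 zeroM). split.
      - rewrite Hm2 /=. constructor; [exact Hphz|]. constructor; [exact (zeroIn N HN)|].
        apply F2_nseq. reflexivity.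
      - apply (ch_ident Hch z). reflexivity. }
    case: (proj2 (proj2 Hprime) rs a Hrs Hsub') => i [Hi Hgi].
    exists i; split => //. move=> D [a' [Ea' [z [Hz ED]]]]. exists z; split; [|exact ED].
    have Ha' : coset m f zeroM N a a'.
    { rewrite -Ea. simpl in Ea'. rewrite Ea'. apply selfmem. }
    case: Ha' => xs [H2 Hf].
    set s := nth oneR rs i :: nseq (n - 2) oneR.
    have Hss : size s = n.-1 by rewrite /= size_nseq; lia.
    have Hxs : size xs = m by rewrite (F2_size H2) /= size_nseq; lia.
    have [H1 _] := hm_ax1 HM Hss Hxs z.
    have [zs [Hzs Hfz]] := H1 (ex_intro _ a' (conj Hf Hz)).
    apply (Qcl zs); [by rewrite (F2_size Hzs) size_map| |exact Hfz].
    apply (forall2_map_forall (P := fun x => x = a \/ Q x) Hzs).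
    + apply (F2_Forall_gen (P := fun S => hsubset S (fun x => x = a \/ Q x)) H2).
      * constructor; [by move=> y ->; left|]. constructor; [by move=> y /HNQ; right|].
        apply Forall_nseq. move=> y ->. right. exact (zeroIn Q HQ).
      * move=> y A Ay HA. exact: HA y Ay.
    + move=> x w [->|Qx] Hw; [exact: Hgi w Hw|].
      exact: gcl s x Hss Qx w Hw.
Qed.
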